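(* Under the coupling $\bar\pi_{\Lambda_N}$ described in the context, $o\in\mathcal C^{\Lambda_N}$ only if $o$ is connected to $\partial\Lambda_N$ in $\mathcal C^{\Lambda_N}$, i.e. only if there is a nearest-neighbor path of vertices of $\mathcal C^{\Lambda_N}$ from $o$ to a vertex adjacent to $\partial\Lambda_N$.
   Context: Fix $\beta>0$ and a realization of the field $\{h_v\}$. $u\sim v$ if $|u-v|_1=1$; $\partial A=\{v\in\mathbb Z^2\setminus A:u\sim v\text{ for some }u\in A\}$; $\Lambda_N=\{v\in\mathbb Z^2:|v|_\infty\le N\}$; $o$ the origin. $\mu^{\Lambda_N,\pm}$ is the Ising measure on $\Lambda_N$ with weights $e^{-\beta H^{\Lambda_N,\pm}}$, $H^{\Lambda_N,\pm}(\sigma)=-\big(\sum_{u\sim v,\,u,v\in\Lambda_N}\sigma_u\sigma_v\pm\sum_{u\sim v,\,u\in\Lambda_N,v\in\partial\Lambda_N}\sigma_u+\sum_{u\in\Lambda_N}\sigma_uh_u\big)$. The coupling $\bar\pi_{\Lambda_N}$ of $(\sigma^{\Lambda_N,+},\sigma^{\Lambda_N,-})$ is built by sequentially sampling vertices: whenever a vertex $v$ is sampled, given the already-sampled set $V$ and spins on it, let $p_\pm=\mu^{\Lambda_N,\pm}(\sigma_v=1\mid\sigma^{\Lambda_N,\pm}_V)$; draw $U$ uniform on $[0,1]$ and set $\sigma^{\Lambda_N,\pm}_v=-1$ iff $U\le1-p_\pm$. The order of sampling is: $\mathcal C^{\Lambda_N}$ denotes the set of already-sampled $v$ with $\sigma^{\Lambda_N,+}_v>\sigma^{\Lambda_N,-}_v$;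 set $A_0=\partial\Lambda_N$; for $k=0,1,2,\ldots$, at stage $k+1$ set $A_{k+1}=\emptyset$; if $A_k=\emptyset$, sample all remaining unsampled vertices of $\Lambda_N$ in an arbitrary fixed order and stop; otherwise sample (in an arbitrary fixed order) all not-yet-sampled vertices of $\Lambda_N$ adjacent to $A_k$, and add each newly sampled vertex lying in $\mathcal C^{\Lambda_N}$ to $A_{k+1}$. At the end, $\mathcal C^{\Lambda_N}=\{v\in\Lambda_N:\sigma^{\Lambda_N,+}_v>\sigma^{\Lambda_N,-}_v\}$. *)

(* Defs.v *)
From HB Require Import structures.
From mathcomp Require Import all_boot all_order all_algebra.
From mathcomp Require Import mathcomp_extra boolp reals.
From mathcomp.analysis Require Import sequences exp.
Set Implicit Arguments. Unset Strict Implicit. Unset Printing Implicit Defensive.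
Import Order.TTheory GRing.Theory Num.Theory.
Local Open Scope ring_scope.

Definition Z2 := (int * int)%type.

Definition adjZ (a b : Z2) : bool :=
  (absz (a.1 - b.1) + absz (a.2 - b.2) == 1)%N.

Definition nbrs4 (z : Z2) : seq Z2 :=
  [:: (z.1 + 1, z.2); (z.1 - 1, z.2); (z.1, z.2 + 1); (z.1, z.2 - 1)].

Definition inLam (N : nat) (z : Z2) : bool :=
  (`|z.1| <= N%:Z) && (`|z.2| <= N%:Z).

Definition bdry (N : nat) (z : Z2) : bool :=
  ~~ inLam N z && has (inLam N) (nbrs4 z).

(* Vertices of Lambda_N as a finite type: (i, j) represents (i - N, j - N). *)
Definition V (N : nat) := ('I_(2 * N).+1 * 'I_(2 * N).+1)%type.

Definition coord (N : nat) (v : V N) : Z2 :=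
  ((v.1 : nat)%:Z - N%:Z, (v.2 : nat)%:Z - N%:Z).

Definition adj (N : nat) (u v : V N) : bool := adjZ (coord u) (coord v).

Definition adj_bdry (N : nat) (v : V N) : bool := has (bdry N) (nbrs4 (coord v)).

Definition origin (N : nat) : V N := (inord N, inord N).

Definition spin (R : realType) (b : bool) : R := if b then 1 else -1.

Section Ising.
Variables (R : realType) (beta : R) (h : Z2 -> R) (N : nat).

(* H^{Lambda_N, s}(sigma); s = true is the + boundary condition, s = false the - one.
   Spins: true = +1, false = -1. The sum over unordered adjacent pairs in Lambda_N
   is written as half the sum over ordered pairs. *)
Definition Ham (s : bool) (sigma : {ffun V N -> bool}) : R :=
  - ( 2^-1 * (\sum_(u : V N) \sum_(v : V N | adj u v) spin R (sigma u) * spin R (sigma v))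
      + spin R s * (\sum_(u : V N) \sum_(z <- nbrs4 (coord u) | bdry N z) spin R (sigma u))
      + \sum_(u : V N) spin R (sigma u) * h (coord u)).

Definition weight (s : bool) (sigma : {ffun V N -> bool}) : R :=
  expR (- beta * Ham s sigma).

Definition wsum (s : bool) (P : pred {ffun V N -> bool}) : R :=
  \sum_(sigma : {ffun V N -> bool} | P sigma) weight s sigma.

Definition agree (Sv : {set V N}) (tau sigma : {ffun V N -> bool}) : bool :=
  [forall u in Sv, sigma u == tau u].

Definition condp (s : bool) (Sv : {set V N}) (tau : {ffun V N -> bool}) (v : V N) : R :=
  wsum s (fun sigma => agree Sv tau sigma && sigma v) / wsum s (agree Sv tau).

(* state: (sampled set, sigma^+, sigma^-) *)
Definition state := ({set V N} * {ffun V N -> bool} * {ffun V N -> bool})%type.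

Definition sample1 (U : V N -> R) (st : state) (v : V N) : state :=
  let: (Sv, sp, sm) := st in
  let pp := condp true Sv sp v in
  let pm := condp false Sv sm v in
  (v |: Sv,
   [ffun x => if x == v then ~~ (U v <= 1 - pp) else sp x],
   [ffun x => if x == v then ~~ (U v <= 1 - pm) else sm x]).

Definition sample_seq (U : V N -> R) (st : state) (l : seq (V N)) : state :=
  foldl (sample1 U) st l.

Definition inC (st : state) (v : V N) : bool :=
  let: (Sv, sp, sm) := st in (v \in Sv) && sp v && ~~ sm v.

(* A_k is represented by [first] (true iff k = 0, i.e. A_0 = \partial Lambda_N)
   and a set A of vertices of Lambda_N (used for k >= 1). *)
Definition adjA (first : bool) (A : {set V N}) (v : V N) : bool :=
  if first then adj_bdry v else [exists u in A, adj u v].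

(* Run the stages with fuel n; ord is the arbitrary fixed order.
   When A_k is empty (or the fuel runs out, which never happens for n large)
   all remaining vertices are sampled in the order ord. *)
Fixpoint stages (U : V N -> R) (ord : seq (V N)) (n : nat)
    (first : bool) (A : {set V N}) (st : state) : state :=
  let rest := [seq v <- ord | v \notin st.1.1] in
  match n with
  | 0 => sample_seq U st rest
  | n'.+1 =>
    if ~~ first && (A == set0) then sample_seq U st rest
    else
      let todo := [seq v <- ord | (v \notin st.1.1) && adjA first A v] in
      let st' := sample_seq U st todo in
      stages U ord n' false [set v in todo | inC st' v] st'
  end.

Definition init_state : state := (set0, [ffun => true], [ffun => true]).

Definition coupling (U : V N -> R) (ord : seq (V N)) : state :=
  stages U ord (#|{: V N}|.+2) true set0 init_state.

Definition Cset (U : V N -> R) (ord : seq (V N)) : pred (V N) :=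
  fun v => let: (_, sp, sm) := coupling U ord in sp v && ~~ sm v.

End Ising.

(* Main.v *)
Require Import Defs.
From HB Require Import structures.
From mathcomp Require Import all_boot all_order all_algebra.
From mathcomp Require Import mathcomp_extra boolp reals.
From mathcomp.analysis Require Import sequences exp.
From mathcomp Require Import ring lra.
Import Order.TTheory GRing.Theory Num.Theory.
Local Open Scope ring_scope.
Set Implicit Arguments. Unset Strict Implicit. Unset Printing Implicit Defensive.
Lemma two_point (R : realType) (a0 a1 b0 b1 c0 c1 d0 d1 : R) :
  0 <= a0 -> 0 <= a1 -> 0 <= b0 -> 0 <= b1 -> 0 <= c0 -> 0 <= c1 -> 0 <= d0 -> 0 <= d1 ->
  a0 * b0 <= c0 * d0 -> a0 * b1 <= c1 * d0 -> a1 * b0 <= c1 * d0 -> a1 * b1 <= c1 * d1 ->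
  (a0 + a1) * (b0 + b1) <= (c0 + c1) * (d0 + d1).
Proof.
move=> ha0 ha1 hb0 hb1 hc0 hc1 hd0 hd1 h00 h01 h10 h11.
have hx : 0 <= c1 * d0 by apply: mulr_ge0.
have hp : (a0 * b0) * (a1 * b1) <= (c0 * d0) * (c1 * d1).
  by apply: ler_pM => //; apply: mulr_ge0.
suff key : a0 * b1 + a1 * b0 <= c1 * d0 + c0 * d1.
  have -> : (a0 + a1) * (b0 + b1) = a0 * b0 + a1 * b1 + (a0 * b1 + a1 * b0) by ring.
  have -> : (c0 + c1) * (d0 + d1) = c0 * d0 + c1 * d1 + (c1 * d0 + c0 * d1) by ring.
  by apply: lerD => //; apply: lerD.
have [x0|xpos] := eqVneq (c1 * d0) 0.
  have e1 : a0 * b1 = 0 by apply/eqP; rewrite eq_le mulr_ge0 // andbT -x0.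
  have e2 : a1 * b0 = 0 by apply/eqP; rewrite eq_le mulr_ge0 // andbT -x0.
  rewrite e1 e2 x0 !add0r; exact: mulr_ge0.
have xp : 0 < c1 * d0 by rewrite lt_def xpos hx.
set x := c1 * d0 in hx h01 h10 xpos xp *.
set y := c0 * d1.
have e : (c0 * d0) * (c1 * d1) = x * y by rewrite /x /y; ring.
have e' : (a0 * b0) * (a1 * b1) = (a0 * b1) * (a1 * b0) by ring.
rewrite e e' in hp.
have q : 0 <= (x - a0 * b1) * (x - a1 * b0) by apply: mulr_ge0; rewrite subr_ge0.
rewrite -(ler_pM2l xp).
nra.
Qed.

Definition AD (R : realType) (X : finType) (jn mt : X -> X -> X) : Prop :=
  forall f1 f2 f3 f4 : X -> R,
  (forall x, 0 <= f1 x) -> (forall x, 0 <= f2 x) ->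
  (forall x, 0 <= f3 x) -> (forall x, 0 <= f4 x) ->
  (forall x y, f1 x * f2 y <= f3 (jn x y) * f4 (mt x y)) ->
  (\sum_x f1 x) * (\sum_x f2 x) <= (\sum_x f3 x) * (\sum_x f4 x).

Lemma AD_bool (R : realType) : AD R orb andb.
Proof.
move=> f1 f2 f3 f4 h1 h2 h3 h4 H.
rewrite !big_bool.
have := two_point (h1 false) (h1 true) (h2 false) (h2 true) (h3 false) (h3 true)
  (h4 false) (h4 true) (H false false) (H false true) (H true false) (H true true).
by rewrite /= !(addrC (_ true)).
Qed.

Lemma AD_prod (R : realType) (X Y : finType) jX mX jY mY :
  AD R jX mX -> AD R jY mY ->
  AD R (fun p q : X * Y => (jX p.1 q.1, jY p.2 q.2))
       (fun p q : X * Y => (mX p.1 q.1, mY p.2 q.2)).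
Proof.
move=> ADX ADY f1 f2 f3 f4 h1 h2 h3 h4 H.
have E (f : X * Y -> R) : \sum_p f p = \sum_x \sum_y f (x, y).
  by rewrite pair_bigA; apply: eq_bigr => -[].
rewrite !E.
apply: ADX => [x|x|x|x|x x'].
- by apply: sumr_ge0 => y _.
- by apply: sumr_ge0 => y _.
- by apply: sumr_ge0 => y _.
- by apply: sumr_ge0 => y _.
apply: ADY => // y y'.
Qed.

Lemma AD_transfer (R : realType) (X Y : finType) jX mX jY mY (g : X -> Y) (g' : Y -> X) :
  cancel g g' -> cancel g' g ->
  (forall x y, g (jX x y) = jY (g x) (g y)) ->
  (forall x y, g (mX x y) = mY (g x) (g y)) ->
  AD R jY mY -> AD R jX mX.
Proof.
move=> gK g'K gj gm ADY f1 f2 f3 f4 h1 h2 h3 h4 H.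
rewrite !(reindex g') /=; last by exists g => y _; rewrite ?g'K ?gK.
all: try by exists g => y _; rewrite ?g'K ?gK.
apply: ADY => // a b.
have := H (g' a) (g' b).
have ej : jX (g' a) (g' b) = g' (jY a b) by apply: (can_inj gK); rewrite gj !g'K.
have em : mX (g' a) (g' b) = g' (mY a b) by apply: (can_inj gK); rewrite gm !g'K.
by rewrite ej em.
Qed.

Definition fjoin (T : finType) (f g : {ffun T -> bool}) : {ffun T -> bool} :=
  [ffun i => f i || g i].
Definition fmeet (T : finType) (f g : {ffun T -> bool}) : {ffun T -> bool} :=
  [ffun i => f i && g i].

Lemma AD_ord0 (R : realType) : AD R (@fjoin 'I_0) (@fmeet 'I_0).
Proof.
have all0 (x : {ffun 'I_0 -> bool}) : x = [ffun => false].
  by apply/ffunP => -[].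
move=> f1 f2 f3 f4 h1 h2 h3 h4 H.
have E (f : {ffun 'I_0 -> bool} -> R) : \sum_x f x = f [ffun => false].
  by apply: big_pred1 => x /=; rewrite (all0 x) eqxx.
rewrite !E.
have := H [ffun => false] [ffun => false].
by rewrite (all0 (fjoin _ _)) (all0 (fmeet _ _)).
Qed.

Definition splitf n (f : {ffun 'I_n.+1 -> bool}) : bool * {ffun 'I_n -> bool} :=
  (f ord0, [ffun i => f (lift ord0 i)]).
Definition unsplitf n (p : bool * {ffun 'I_n -> bool}) : {ffun 'I_n.+1 -> bool} :=
  [ffun i => if unlift ord0 i is Some j then p.2 j else p.1].

Lemma AD_ord (R : realType) n : AD R (@fjoin 'I_n) (@fmeet 'I_n).
Proof.
elim: n => [|n IH]; first exact: AD_ord0.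
apply: (@AD_transfer R _ _ _ _ (fun p q => (orb p.1 q.1, fjoin p.2 q.2))
   (fun p q => (andb p.1 q.1, fmeet p.2 q.2)) (@splitf n) (@unsplitf n)).
- move=> f; apply/ffunP => i; rewrite /unsplitf /splitf ffunE.
  by case: unliftP => [j ->|->] /=; rewrite ?ffunE.
- move=> [b f]; rewrite /unsplitf /splitf /= ffunE unlift_none; congr (_, _).
  by apply/ffunP => i; rewrite !ffunE liftK.
- by move=> x y; rewrite /splitf /fjoin !ffunE; congr (_, _); apply/ffunP => i; rewrite !ffunE.
- by move=> x y; rewrite /splitf /fmeet !ffunE; congr (_, _); apply/ffunP => i; rewrite !ffunE.
- exact: AD_prod (@AD_bool R) IH.
Qed.

Lemma AD_ffun (R : realType) (T : finType) : AD R (@fjoin T) (@fmeet T).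
Proof.
apply: (@AD_transfer R _ _ _ _ (@fjoin _) (@fmeet _) (fun f : {ffun T -> bool} => [ffun i => f (enum_val i)])
  (fun g => [ffun x => g (enum_rank x)])).
- by move=> f; apply/ffunP => x; rewrite !ffunE enum_rankK.
- by move=> g; apply/ffunP => i; rewrite !ffunE enum_valK.
- by move=> x y; apply/ffunP => i; rewrite /fjoin !ffunE.
- by move=> x y; apply/ffunP => i; rewrite /fmeet !ffunE.
- exact: AD_ord.
Qed.

Lemma spin_lat (R : realType) a b c d :
  spin R a * spin R c + spin R b * spin R d <= spin R (a||b) * spin R (c||d) + spin R (a&&b) * spin R (c&&d).
Proof. by case: a; case: b; case: c; case: d; rewrite /spin /=; lra. Qed.
Lemma spin_lat1 (R : realType) a b :
  spin R a + spin R (a && b) <= spin R (a||b) + spin R b.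
Proof. by case: a; case: b; rewrite /spin /=; lra. Qed.
Lemma spin_lat0 (R : realType) a b (c : R) :
  spin R a * c + spin R b * c = spin R (a||b) * c + spin R (a && b) * c.
Proof. by case: a; case: b => //=; rewrite addrC. Qed.

Section Ising2.
Variables (R : realType) (beta : R) (h : Z2 -> R) (N : nat).

Definition Iint (x : {ffun V N -> bool}) : R :=
  \sum_(u : V N) \sum_(v : V N | adj u v) spin R (x u) * spin R (x v).
Definition Bdt (x : {ffun V N -> bool}) : R :=
  \sum_(u : V N) \sum_(z <- nbrs4 (Defs.coord u) | bdry N z) spin R (x u).
Definition Fld (x : {ffun V N -> bool}) : R :=
  \sum_(u : V N) spin R (x u) * h (Defs.coord u).

Lemma HamE s (x : {ffun V N -> bool}) : Ham h s x = - (2^-1 * Iint x + spin R s * Bdt x + Fld x).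
Proof. by []. Qed.

Lemma Iint_lat (x y : {ffun V N -> bool}) : Iint x + Iint y <= Iint (fjoin x y) + Iint (fmeet x y).
Proof.
rewrite /Iint -!big_split /=; apply: ler_sum => u _.
rewrite -!big_split /=; apply: ler_sum => v _.
rewrite !ffunE; exact: spin_lat.
Qed.

Lemma Bdt_lat (x y : {ffun V N -> bool}) : Bdt x + Bdt (fmeet x y) <= Bdt (fjoin x y) + Bdt y.
Proof.
rewrite /Bdt -!big_split /=; apply: ler_sum => u _.
rewrite -!big_split /=; apply: ler_sum => z _.
rewrite !ffunE; exact: spin_lat1.
Qed.

Lemma Fld_lat (x y : {ffun V N -> bool}) : Fld x + Fld y = Fld (fjoin x y) + Fld (fmeet x y).
Proof.
rewrite /Fld -!big_split /=; apply: eq_bigr => u _.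
rewrite !ffunE; exact: spin_lat0.
Qed.

Lemma Ham_lat (x y : {ffun V N -> bool}) : Ham h true (fjoin x y) + Ham h false (fmeet x y) <= Ham h true x + Ham h false y.
Proof.
rewrite !HamE /spin.
have hI := Iint_lat x y.
have hB := Bdt_lat x y.
have hF := Fld_lat x y.
have c0 : (0 : R) < 2^-1 by rewrite invr_gt0.
have hI' : 2^-1 * Iint x + 2^-1 * Iint y <= 2^-1 * Iint (fjoin x y) + 2^-1 * Iint (fmeet x y).
  by rewrite -!mulrDr ler_pM2l.
lra.
Qed.

Lemma weight_lat (x y : {ffun V N -> bool}) : 0 < beta ->
  weight beta h true x * weight beta h false y <=
  weight beta h true (fjoin x y) * weight beta h false (fmeet x y).
Proof.
move=> bp; rewrite /weight -!expRD ler_expR.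
rewrite -!mulrDr ler_nM2l ?oppr_lt0 //.
exact: Ham_lat.
Qed.

Lemma weight_gt0 s (x : {ffun V N -> bool}) : 0 < weight beta h s x.
Proof. exact: expR_gt0. Qed.

Lemma wsum_ge0 s (P : pred {ffun V N -> bool}) : 0 <= wsum beta h s P.
Proof. by apply: sumr_ge0 => i _; apply/ltW/weight_gt0. Qed.

Lemma wsum_agree_gt0 s (S : {set V N}) t : 0 < wsum beta h s (agree S t).
Proof.
rewrite /wsum (bigD1 t) /=; last by apply/forall_inP => u _.
apply: ltr_wpDr; last exact: weight_gt0.
by apply: sumr_ge0 => i _; apply/ltW/weight_gt0.
Qed.

Lemma wsum_split s (S : {set V N}) t v : wsum beta h s (agree S t) =
  wsum beta h s (fun x => agree S t x && x v) + wsum beta h s (fun x => agree S t x && ~~ x v).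
Proof. by rewrite /wsum (bigID (fun x : {ffun V N -> bool} => x v)). Qed.

Lemma fkg (S : {set V N}) (tp tm : {ffun V N -> bool}) v : 0 < beta -> (forall u, u \in S -> tm u -> tp u) ->
  condp beta h false S tm v <= condp beta h true S tp v.
Proof.
move=> bp hmon.
rewrite /condp.
have := wsum_agree_gt0 true S tp; have := wsum_agree_gt0 false S tm.
rewrite !(wsum_split _ _ _ v).
set Ap := wsum _ _ true _; set An := wsum _ _ true _.
set Bp := wsum _ _ false _; set Bn := wsum _ _ false _.
move=> hB hA.
have key : An * Bp <= Ap * Bn.
  pose f1 x := if agree S tp x && ~~ x v then weight beta h true x else 0.
  pose f2 x := if agree S tm x && x v then weight beta h false x else 0.
  pose f3 x := if agree S tp x && x v then weight beta h true x else 0.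
  pose f4 x := if agree S tm x && ~~ x v then weight beta h false x else 0.
  have E1 : An = \sum_x f1 x by rewrite /An /wsum big_mkcond.
  have E2 : Bp = \sum_x f2 x by rewrite /Bp /wsum big_mkcond.
  have E3 : Ap = \sum_x f3 x by rewrite /Ap /wsum big_mkcond.
  have E4 : Bn = \sum_x f4 x by rewrite /Bn /wsum big_mkcond.
  have g0 s (b : bool) (x : {ffun V N -> bool}) : 0 <= if b then weight beta h s x else 0.
    by case: b => //; apply/ltW/weight_gt0.
  rewrite E1 E2 E3 E4; apply: (@AD_ffun R (V N)) => [x|x|x|x|x y]; try exact: g0.
  rewrite /f1 /f2 /f3 /f4.
  case: ifP => [/andP[ax nxv]|_]; last by rewrite mul0r; apply: mulr_ge0; apply: g0.
  case: ifP => [/andP[ay yv]|_]; last by rewrite mulr0; apply: mulr_ge0; apply: g0.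
  have -> : agree S tp (fjoin x y) && fjoin x y v.
    rewrite /fjoin ffunE yv orbT andbT; apply/forall_inP => u uS; rewrite ffunE.
    move/forall_inP/(_ u uS)/eqP: ax => ->; move/forall_inP/(_ u uS)/eqP: ay => ->.
    by case E: (tm u); rewrite ?orbF ?orbT // (hmon u uS E).
  have -> : agree S tm (fmeet x y) && ~~ fmeet x y v.
    rewrite /fmeet ffunE (negbTE nxv) andbT; apply/forall_inP => u uS; rewrite ffunE.
    move/forall_inP/(_ u uS)/eqP: ax => ->; move/forall_inP/(_ u uS)/eqP: ay => ->.
    by case E: (tm u); rewrite ?andbF ?andbT // (hmon u uS E).
  exact: weight_lat.
have hAp : 0 <= Ap by apply: wsum_ge0.
have hAn : 0 <= An by apply: wsum_ge0.
have hBp : 0 <= Bp by apply: wsum_ge0.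
have hBn : 0 <= Bn by apply: wsum_ge0.
rewrite ler_pdivrMr // mulrAC ler_pdivlMr //.
by rewrite !mulrDr (mulrC Bp Ap) lerD2l mulrC.
Qed.



Lemma adj_sym (u w : V N) : adj u w = adj w u.
Proof. rewrite /adj /adjZ. congr (_ + _ == _)%N; by rewrite -abszN opprB. Qed.

Section Markov.
Variables (S : {set V N}) (tp tm : {ffun V N -> bool}).
Hypothesis hS : forall u w, u \in S -> w \notin S -> adj u w -> tp u = tm u.
Hypothesis hB : forall w, w \notin S -> ~~ adj_bdry w.

Definition phi (x : {ffun V N -> bool}) : {ffun V N -> bool} :=
  [ffun u => if u \in S then tm u else x u].
Definition psi (x : {ffun V N -> bool}) : {ffun V N -> bool} :=
  [ffun u => if u \in S then tp u else x u].

Lemma agreeP (t x : {ffun V N -> bool}) u : agree S t x -> u \in S -> x u = t u.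
Proof. by move/forall_inP/(_ u)=> H uS; apply/eqP/H. Qed.

Lemma Ham_shift (x : {ffun V N -> bool}) : agree S tp x ->
  Ham h true x = Ham h false (phi x) + (Ham h true tp - Ham h false (phi tp)).
Proof.
move=> ax.
have eI : Iint x + Iint (phi tp) = Iint (phi x) + Iint tp.
  rewrite /Iint -!big_split /=; apply: eq_bigr => u _.
  rewrite -!big_split /=; apply: eq_bigr => w uw.
  rewrite !ffunE.
  case: (boolP (u \in S)) => uS; case: (boolP (w \in S)) => wS.
  - by rewrite (agreeP ax uS) (agreeP ax wS) addrC.
  - by rewrite (agreeP ax uS) -(hS uS wS uw).
  - by rewrite (agreeP ax wS) -(hS wS uS _) // adj_sym.
  - by [].
have eB : Bdt x + Bdt (phi x) = Bdt tp + Bdt (phi tp).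
  rewrite /Bdt -!big_split /=; apply: eq_bigr => u _.
  case: (boolP (u \in S)) => uS.
    by rewrite !ffunE uS (agreeP ax uS).
  have hb := hB uS; rewrite /adj_bdry in hb.
  by rewrite !big_hasC // addr0.
have eF : Fld x + Fld (phi tp) = Fld (phi x) + Fld tp.
  rewrite /Fld -!big_split /=; apply: eq_bigr => u _.
  rewrite !ffunE; case: (boolP (u \in S)) => uS.
    by rewrite (agreeP ax uS) addrC.
  by [].
rewrite !HamE /spin.
set c := (2^-1 : R).
have eI' : c * Iint x + c * Iint (phi tp) = c * Iint (phi x) + c * Iint tp.
  by rewrite -!mulrDr eI.
lra.
Qed.

Definition Kc : R := expR (- beta * (Ham h true tp - Ham h false (phi tp))).

Lemma wsum_shift (P : pred {ffun V N -> bool}) :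
  (forall x, P (phi x) = P x) ->
  wsum beta h true (fun x => agree S tp x && P x) =
  wsum beta h false (fun x => agree S tm x && P x) * Kc.
Proof.
move=> hP.
rewrite /wsum big_distrl /=.
have -> : \sum_(x | agree S tp x && P x) weight beta h true x =
          \sum_(x | agree S tp x && P x) (weight beta h false (phi x) * Kc).
  apply: eq_bigr => x /andP[ax _].
  by rewrite /weight /Kc (Ham_shift ax) mulrDr expRD.
symmetry.
rewrite (reindex_onto phi psi) /=; last first.
  move=> y /andP[ay _]; apply/ffunP => u; rewrite !ffunE.
  by case: (boolP (u \in S)) => uS; rewrite ?(agreeP ay uS) // (negbTE uS).
apply: eq_bigl => x.
have -> : agree S tm (phi x) by apply/forall_inP => u uS; rewrite ffunE uS.
rewrite hP /=.
have -> : (psi (phi x) == x) = agree S tp x.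
  apply/eqP/forall_inP.
    by move=> <- u uS; rewrite !ffunE uS.
  move=> H; apply/ffunP => u; rewrite !ffunE; case: (boolP (u \in S)) => uS //.
  by apply/esym/eqP/H.
by rewrite andbC.
Qed.

Lemma markov v : v \notin S ->
  condp beta h true S tp v = condp beta h false S tm v.
Proof.
move=> vS.
rewrite /condp.
have e1 := @wsum_shift (fun x => x v).
have e2 := @wsum_shift predT.
rewrite e1; last by move=> x; rewrite ffunE (negbTE vS).
have -> : wsum beta h true (agree S tp) = wsum beta h true (fun x => agree S tp x && predT x).
  by apply: eq_bigl => x; rewrite andbT.
rewrite e2 //.
have -> : wsum beta h false (fun x => agree S tm x && predT x) = wsum beta h false (agree S tm).
  by apply: eq_bigl => x; rewrite andbT.
have K0 : Kc != 0 by rewrite gt_eqF // expR_gt0.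
by rewrite invfM mulrACA divff // mulr1.
Qed.

End Markov.
End Ising2.

Section Process.
Variables (R : realType) (beta : R) (h : Z2 -> R) (N : nat) (U : V N -> R).
Hypothesis bp : 0 < beta.

Local Notation st_t := (state N).
Local Notation s1 := (sample1 beta h U).
Local Notation sseq := (sample_seq beta h U).

Lemma inCE (st : st_t) u : inC st u = [&& u \in st.1.1, st.1.2 u & ~~ st.2 u].
Proof. by case: st => [[S sp] sm]; rewrite /= andbA. Qed.

Lemma s1_S (st : st_t) v : (s1 st v).1.1 = v |: st.1.1.
Proof. by case: st => [[S sp] sm]. Qed.

Lemma s1_keep (st : st_t) v u : u != v ->
  (s1 st v).1.2 u = st.1.2 u /\ (s1 st v).2 u = st.2 u.
Proof. by case: st => [[S sp] sm] /= uv; rewrite !ffunE (negbTE uv). Qed.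

Lemma sseq_S (st : st_t) l : (sseq st l).1.1 = st.1.1 :|: [set x in l].
Proof.
elim: l st => [|x l IH] st /=.
  by apply/setP => u; rewrite !inE orbF.
rewrite IH s1_S; apply/setP => u; rewrite !inE; by case: (u == x); rewrite ?orbT.
Qed.

Lemma sseq_keep (st : st_t) l u : u \notin l ->
  (sseq st l).1.2 u = st.1.2 u /\ (sseq st l).2 u = st.2 u.
Proof.
elim: l st => [|x l IH] st //=.
rewrite inE negb_or => /andP[ux ul].
have [e1 e2] := IH (s1 st x) ul; have [e3 e4] := s1_keep st ux.
by rewrite e1 e2 e3 e4.
Qed.

Lemma inC_sseq (st : st_t) l u : u \notin l -> inC st u -> inC (sseq st l) u.
Proof.
move=> ul; rewrite !inCE sseq_S; have [-> ->] := sseq_keep st ul.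
by case/and3P => uS -> ->; rewrite inE uS.
Qed.

Lemma sseq_ind (Inv : st_t -> Prop) (st : st_t) l :
  (forall st v, Inv st -> v \notin st.1.1 -> Inv (s1 st v)) ->
  uniq l -> (forall x, x \in l -> x \notin st.1.1) -> Inv st -> Inv (sseq st l).
Proof.
move=> step; elim: l st => [|x l IH] st //= /andP[xl ul] hl hI.
apply: IH => //.
  move=> y yl; rewrite s1_S !inE negb_or hl ?inE ?yl ?orbT // andbT.
  by apply/eqP => yx; rewrite -yx yl in xl.
by apply: step => //; apply: hl; rewrite inE eqxx.
Qed.

Definition Mon (st : st_t) := forall u, u \in st.1.1 -> st.2 u -> st.1.2 u.

Lemma Mon_s1 (st : st_t) v : Mon st -> Mon (s1 st v).
Proof.
case: st => [[S sp] sm] hM u /=; rewrite !ffunE !inE.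
case: (eqVneq u v) => [->|uv] /=; last by move=> uS; exact: (hM u uS).
move=> _.
have := fkg h v bp hM.
set pp := condp _ _ true _ _ _; set pm := condp _ _ false _ _ _ => hp.
apply: contra => H.
by apply: (le_trans H); rewrite lerD2l lerN2.
Qed.

Lemma Mon_sseq (st : st_t) l : Mon st -> Mon (sseq st l).
Proof. by elim: l st => [|x l IH] st //= hM; apply/IH/Mon_s1. Qed.

Definition haspath (st : st_t) u := exists p : seq (V N),
  [/\ path (@adj N) u p, all (inC st) (u :: p) & adj_bdry (last u p)].

Lemma haspath_mono (st st' : st_t) u :
  (forall w, inC st w -> inC st' w) -> haspath st u -> haspath st' u.
Proof.
move=> H [p [p1 p2 p3]]; exists p; split => //.
by apply: sub_all p2 => w; apply: H.
Qed.

Definition Inv_rest (st0 st : st_t) :=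
  [/\ forall u w, u \in st.1.1 -> w \notin st.1.1 -> adj u w -> st.1.2 u = st.2 u,
      forall w, w \notin st.1.1 -> ~~ adj_bdry w
    & forall u, inC st u -> inC st0 u].

Lemma Inv_rest_s1 (st0 st : st_t) v : Inv_rest st0 st -> v \notin st.1.1 ->
  Inv_rest st0 (s1 st v).
Proof.
case: st => [[S sp] sm] [ha hb hc] vS /=.
have hm := @markov R beta h N S sp sm ha hb v vS.
set pp := condp _ _ true _ _ _ in hm; set pm := condp _ _ false _ _ _ in hm.
have ev : (~~ (U v <= 1 - pp)) = (~~ (U v <= 1 - pm)) by rewrite hm.
split.
- move=> u w /=; rewrite !ffunE !inE negb_or.
  case: (eqVneq u v) => [->|uv] /=; first by rewrite ev.
  move=> uS /andP[wv wS] uw; exact: ha uS wS uw.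
- by move=> w /=; rewrite !inE negb_or => /andP[_]; apply: hb.
- move=> u; rewrite inCE /= !ffunE !inE.
  case: (eqVneq u v) => [->|uv] /=; first by rewrite ev; case: (~~ _).
  by move=> H; apply: hc; rewrite inCE /=.
Qed.

Lemma rest_lemma (ord : seq (V N)) (st : st_t) :
  uniq ord -> Mon st ->
  (forall u, inC st u -> forall w, adj u w -> w \in st.1.1) ->
  (forall w, adj_bdry w -> w \in st.1.1) ->
  forall u, inC (sseq st [seq v <- ord | v \notin st.1.1]) u -> inC st u.
Proof.
move=> uo hM hC hB.
suff : Inv_rest st (sseq st [seq v <- ord | v \notin st.1.1]) by case.
apply: sseq_ind.
- by move=> st' v; apply: Inv_rest_s1.
- exact: filter_uniq.
- by move=> x; rewrite mem_filter => /andP[].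
split => //.
- move=> u w uS wS uw.
  have := hM u uS.
  case E1: (st.1.2 u); case E2: (st.2 u) => //= H; last by have := H isT.
  have : inC st u by rewrite inCE uS E1 E2.
  by move/hC/(_ w uw); rewrite (negbTE wS).
- by move=> w; apply: contra; apply: hB.
Qed.



Variables (ord : seq (V N)).
Hypothesis huniq : uniq ord.
Hypothesis hall : forall v : V N, v \in ord.

Local Notation stg := (stages beta h U ord).

Lemma stages_full n first A (st : st_t) : (stg n first A st).1.1 = setT.
Proof.
elim: n first A st => [|n IH] first A st /=.
  by rewrite sseq_S; apply/setP => u; rewrite !inE mem_filter hall andbT; case: (u \in st.1.1).
case: ifP => _; last exact: IH.
by rewrite sseq_S; apply/setP => u; rewrite !inE mem_filter hall andbT; case: (u \in st.1.1).
Qed.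

Definition Inv_stage n (A : {set V N}) (st : st_t) :=
 [/\ Mon st, (forall u, inC st u -> haspath st u),
     (forall u, inC st u -> u \in A \/ (forall w, adj u w -> w \in st.1.1)),
     (forall u, u \in A -> inC st u)
   & ((forall w, adj_bdry w -> w \in st.1.1) /\
      (A != set0 -> (#|{: V N}| + 1 <= #|st.1.1| + n)%N))].

Lemma rest_case n A (st : st_t) : Inv_stage n A st -> A = set0 ->
  forall u, inC (sseq st [seq v <- ord | v \notin st.1.1]) u ->
            haspath (sseq st [seq v <- ord | v \notin st.1.1]) u.
Proof.
move=> [hM hP hC hA [hB _]] A0 u hu.
have hC' : forall u, inC st u -> forall w, adj u w -> w \in st.1.1.
  by move=> x /hC [|//]; rewrite A0 inE.
have := rest_lemma huniq hM hC' hB hu => /hP.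
apply: haspath_mono => w hw; apply: inC_sseq => //.
by rewrite mem_filter negb_and negbK; move: hw; rewrite inCE => /and3P[-> _ _].
Qed.

Lemma stage_main n : forall A (st : st_t), Inv_stage n A st ->
  forall u, inC (stg n false A st) u -> haspath (stg n false A st) u.
Proof.
elim: n => [|n IH] A st hI.
  apply: (rest_case hI); case: (eqVneq A set0) => // hA0; exfalso.
  case: hI => _ _ _ _ [_ /(_ hA0)]; rewrite addn0 => H.
  by have := max_card (mem st.1.1); rewrite leqNgt => /negP; apply; rewrite -addn1.
rewrite /=.
case: ifP => [/eqP A0|/negbT An0]; first exact: (rest_case hI).
apply: IH.
case: hI => [hM hP hC hA [hB hcard]].
set todo := [seq v <- ord | (v \notin st.1.1) && adjA false A v].
set st' := sseq st todo.
have tS : forall x, x \in todo -> x \notin st.1.1.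
  by move=> x; rewrite mem_filter => /andP[/andP[]].
have S'E : st'.1.1 = st.1.1 :|: [set x in todo] by rewrite /st' sseq_S.
have up : forall w, inC st w -> inC st' w.
  move=> w hw; apply: inC_sseq => //; apply/negP => /tS.
  by move: hw; rewrite inCE => /and3P[-> _ _].
have down : forall w, inC st' w -> w \notin todo -> inC st w.
  move=> w; rewrite !inCE S'E inE inE => /and3P[/orP[wS|wt] h1 h2] wt'.
    by have [e1 e2] := sseq_keep st wt'; rewrite wS -e1 -e2 h1 h2.
  by rewrite wt in wt'.
have An0' : A != set0 by rewrite An0.
split.
- exact: Mon_sseq.
- move=> u hu.
  case: (boolP (u \in todo)) => ut; last first.
    by apply: (haspath_mono up); apply: hP; apply: down.
  move: ut; rewrite mem_filter => /andP[/andP[_ /existsP[a /andP[aA au]]] _].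
  have [p [p1 p2 p3]] := haspath_mono up (hP a (hA a aA)).
  exists (a :: p); split => //=.
  + by rewrite adj_sym au.
  + by rewrite hu.
- move=> u hu.
  case: (boolP (u \in todo)) => ut; first by left; rewrite inE ut hu.
  right; have := hC u (down u hu ut) => -[uA|H] w uw; rewrite S'E inE; last by rewrite H.
  case: (boolP (w \in st.1.1)) => //= wS.
  rewrite inE mem_filter hall andbT wS /=.
  by apply/existsP; exists u; rewrite uA uw.
- by move=> u; rewrite inE => /andP[].
split.
- by move=> w /hB wS; rewrite S'E inE wS.
- move=> /set0Pn [x]; rewrite inE => /andP[xt _].
  have := hcard An0'.
  have lt : (#|st.1.1| < #|st'.1.1|)%N.
    apply: proper_card; apply/properP; split.
      by rewrite S'E subsetUl.
    by exists x; rewrite ?S'E ?inE ?xt ?orbT // tS.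
  move=> H; apply: (leq_trans H); by rewrite addnS -addSn leq_add2r.
Qed.

End Process.

Theorem lemma3p19 (R : realType) (beta : R) (h : Z2 -> R) (N : nat)
    (ord : seq (V N)) (U : V N -> R) :
  0 < beta ->
  uniq ord -> (forall v : V N, v \in ord) ->
  (forall v : V N, 0 <= U v <= 1) ->
  Cset beta h U ord (origin N) ->
  exists p : seq (V N),
    [/\ path (@adj N) (origin N) p,
        all (Cset beta h U ord) (origin N :: p)
      & adj_bdry (last (origin N) p)].
Proof.
move=> bp huniq hall _.
have hf : (coupling beta h U ord).1.1 = setT := stages_full beta h U hall _ _ _ _.
have CE : forall u, Cset beta h U ord u = inC (coupling beta h U ord) u.
  move=> u; rewrite /Cset inCE hf inE /=.
  by case: (coupling _ _ _ _) => [[? ?] ?].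
have key : forall u, inC (coupling beta h U ord) u -> haspath (coupling beta h U ord) u.
  have sf : forall n A st, stages beta h U ord n.+1 true A st =
     let todo := [seq v <- ord | (v \notin st.1.1) && adjA true A v] in
     stages beta h U ord n false [set v in todo | inC (sample_seq beta h U st todo) v]
       (sample_seq beta h U st todo) by [].
  rewrite /coupling sf; cbv zeta.
  apply: (stage_main bp huniq hall).
  set todo := [seq v <- ord | _].
  have tE : forall x, (x \in todo) = adj_bdry x.
    by move=> x; rewrite mem_filter hall andbT inE.
  have S1 : (sample_seq beta h U (init_state N) todo).1.1 = [set x in todo].
    by rewrite sseq_S; apply/setP => x; rewrite !inE.
  split.
  - by apply: Mon_sseq => // u; rewrite inE.
  - move=> u hu; exists [::]; split => //=; first by rewrite hu.
    by move: hu; rewrite inCE S1 inE tE => /and3P[].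
  - move=> u hu; left; rewrite inE hu andbT.
    by move: hu; rewrite inCE S1 inE => /and3P[].
  - by move=> u; rewrite inE => /andP[].
  split.
  - by move=> w; rewrite S1 inE tE.
  - by move=> _; rewrite addn1 addnS ltnS leq_addl.
rewrite CE => /key [p [p1 p2 p3]].
exists p; split => //.
by apply: sub_all p2 => w; rewrite CE.
Qed.
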